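(* Let $g\colon\mathbb{R}^d\to\mathbb{R}\cup\{+\infty\}$ be closed and $\alpha$-strongly convex with minimizer $x^\star$. For each $x\in\mathbb{R}^d$ let $g_x\colon\mathbb{R}^d\to\mathbb{R}\cup\{+\infty\}$ be closed convex with $|g_x(y)-g(y)|\le\frac q2\|y-x\|^2$ for all $y$. Let $\theta>q$, $x_0\in\mathbb{R}^d$ and $x_{k+1}=\operatorname{argmin}_{x}\{g_{x_k}(x)+\frac\theta2\|x-x_k\|^2\}$. Then for all $k\ge0$, $$\|x_{k+1}-x^\star\|\le\Big(\frac{\theta+q}{\alpha+\theta}\Big)^{\frac{k+1}{2}}\|x_0-x^\star\|.$$ *)

(* Defs.v *)
From HB Require Import structures.
From mathcomp Require Import all_boot all_order all_algebra.
From mathcomp Require Import all_classical all_reals all_analysis.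
Set Implicit Arguments. Unset Strict Implicit. Unset Printing Implicit Defensive.
Import Order.TTheory GRing.Theory Num.Theory.
Local Open Scope ring_scope.
Local Open Scope ereal_scope.

Section Defs.
Variables (R : realType) (d : nat).
Notation vec := 'rV[R]_d.

Definition enorm (v : vec) : R := Num.sqrt (\sum_(i < d) v ord0 i ^+ 2)%R.

(* values in R ∪ {+oo} *)
Definition no_minfty (f : vec -> \bar R) : Prop := forall x, f x != -oo.

(* closed = lower semicontinuous (w.r.t. the Euclidean norm) *)
Definition lsc (f : vec -> \bar R) : Prop :=
  forall (x : vec) (t : R), t%:E < f x ->
    exists2 delta : R, (0 < delta)%R &
      forall y : vec, (enorm (y - x) < delta)%R -> t%:E < f y.

Definition closed_fun (f : vec -> \bar R) : Prop := no_minfty f /\ lsc f.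

Definition convex_fun (f : vec -> \bar R) : Prop :=
  forall (x y : vec) (l : R), (0 < l < 1)%R ->
    f (l *: x + (1 - l) *: y)%R <= l%:E * f x + (1 - l)%:E * f y.

Definition strongly_convex (alpha : R) (f : vec -> \bar R) : Prop :=
  forall (x y : vec) (l : R), (0 < l < 1)%R ->
    f (l *: x + (1 - l) *: y)%R <=
      l%:E * f x + (1 - l)%:E * f y
      - (alpha / 2 * l * (1 - l) * enorm (x - y) ^+ 2)%:E.

Definition is_minimizer (f : vec -> \bar R) (x : vec) : Prop :=
  forall y, f x <= f y.
End Defs.

(* Main.v *)
Require Import Defs.
From HB Require Import structures.
From mathcomp Require Import all_boot all_order all_algebra.
From mathcomp Require Import all_classical all_reals all_analysis.
From mathcomp Require Import ring lra.
Import Order.TTheory GRing.Theory Num.Theory.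

Local Open Scope ring_scope.
Local Open Scope ereal_scope.
Set Implicit Arguments.
Section S.
Variables (R : realType) (d : nat).
Notation vec := 'rV[R]_d.

Lemma enorm2 (v : vec) : (enorm v ^+ 2 = \sum_(i < d) v ord0 i ^+ 2)%R.
Proof. by rewrite /enorm sqr_sqrtr // sumr_ge0 // => i _; rewrite sqr_ge0. Qed.

Lemma enorm_ge0 (v : vec) : (0 <= enorm v)%R.
Proof. exact: sqrtr_ge0. Qed.

Lemma enormB (a b : vec) : enorm (a - b) = enorm (b - a).
Proof. rewrite /enorm; congr Num.sqrt; apply: eq_bigr => i _; rewrite !mxE; ring. Qed.

Lemma enorm_mid (a b c : vec) (l : R) :
  (enorm (l *: a + (1 - l) *: b - c) ^+ 2 =
   l * enorm (a - c) ^+ 2 + (1 - l) * enorm (b - c) ^+ 2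
   - l * (1 - l) * enorm (a - b) ^+ 2)%R.
Proof.
rewrite !enorm2 !mulr_sumr -sumrN -!big_split /=.
by apply: eq_bigr => i _; rewrite !mxE; ring.
Qed.

Lemma fin_of (e : \bar R) (r : R) : e != -oo -> e <= r%:E -> exists a, e = a%:E.
Proof. case: e => [a _ _| _ |]; [by exists a| by [] | by rewrite eqxx]. Qed.

Lemma lim_l (X c Y : R) : (forall l, 0 < l < 1 -> X + c * (1 - l) <= Y)%R -> (X + c <= Y)%R.
Proof.
move=> H.
have [c0|c0] := lerP c 0.
  have := H (2^-1)%R; rewrite invr_gt0 invf_lt1 ?ltr1n // ltr0n => /(_ isT); nra.
apply/ler_addgt0Pr => e e0.
pose l := Num.min (2^-1)%R (e / c)%R.
have l0 : (0 < l)%R by rewrite lt_min invr_gt0 ltr0n divr_gt0.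
have l1 : (l < 1)%R by rewrite gt_min invf_lt1 ?ltr1n.
have le : (l <= e / c)%R by rewrite ge_min lexx orbT.
have := H l; rewrite l0 l1 => /(_ isT).
have : (c * l <= e)%R by rewrite -ler_pdivlMl // mulrC.
lra.
Qed.
End S.
Section S2.
Variables (R : realType) (d : nat).
Notation vec := 'rV[R]_d.

Lemma step (g gxz : vec -> \bar R) (alpha q theta : R) (s z p : vec) :
  strongly_convex alpha g -> is_minimizer g s -> g s \is a fin_num ->
  no_minfty gxz -> convex_fun gxz ->
  (forall y, gxz y <= g y + (q / 2 * enorm (y - z) ^+ 2)%:E /\
               g y <= gxz y + (q / 2 * enorm (y - z) ^+ 2)%:E) ->
  is_minimizer (fun y => gxz y + (theta / 2 * enorm (y - z) ^+ 2)%:E) p ->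
  ((alpha + theta) * enorm (p - s) ^+ 2 + (theta - q) * enorm (p - z) ^+ 2
     <= (theta + q) * enorm (s - z) ^+ 2)%R.
Proof.
move=> hsc hmin hfin hno hcv hq hp.
pose G := fine (g s).
have gsE : g s = G%:E by rewrite /G fineK.
have [A gxsE] : exists A, gxz s = A%:E.
  apply: (@fin_of _ _ (G + q / 2 * enorm (s - z) ^+ 2)%R (hno s)).
  by have [+ _] := hq s; rewrite gsE.
have [B gxpE] : exists B, gxz p = B%:E.
  have := hp s; rewrite gxsE /=.
  move: (hno p); case: (gxz p) => [B _ _| _ |]; [by exists B| by [] | by rewrite eqxx].
have [C gpE] : exists C, g p = C%:E.
  apply: (@fin_of _ _ (B + q / 2 * enorm (p - z) ^+ 2)%R).
    by apply/negP => /eqP gp; have := hmin p; rewrite gp gsE.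
  by have [_] := hq p; rewrite gxpE.
have h1 : (G + alpha / 2 * enorm (p - s) ^+ 2 <= C)%R.
  apply: lim_l => l /andP[l0 l1].
  have := hsc p s l; rewrite l0 l1 => /(_ isT).
  have := hmin (l *: p + (1 - l) *: s)%R.
  move=> /le_trans h /h{h}; rewrite gsE gpE -!EFinM.
  rewrite -!EFinD lee_fin => H.
  nra.
have h2 : (B + theta / 2 * enorm (p - z) ^+ 2 + theta / 2 * enorm (s - p) ^+ 2
             <= A + theta / 2 * enorm (s - z) ^+ 2)%R.
  apply: lim_l => l /andP[l0 l1].
  have := hcv s p l; rewrite l0 l1 => /(_ isT).
  rewrite gxsE gxpE -!EFinM -EFinD => H1.
  have := hp (l *: s + (1 - l) *: p)%R; rewrite gxpE /=.
  move=> /le_trans /(_ (leeD H1 (lexx _))); rewrite -!EFinD lee_fin enorm_mid => H.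
  nra.
have [h3 _] := hq s; rewrite gsE gxsE -EFinD lee_fin in h3.
have [_ h4] := hq p; rewrite gpE gxpE -EFinD lee_fin in h4.
rewrite [enorm (s - p)]enormB in h2.
lra.
Qed.
End S2.
Unset Implicit Arguments.
Theorem mainTheorem10 (R : realType) (d : nat)
  (g : 'rV[R]_d -> \bar R) (alpha : R) (xstar : 'rV[R]_d)
  (gx : 'rV[R]_d -> 'rV[R]_d -> \bar R) (q theta : R)
  (x : nat -> 'rV[R]_d) :
  closed_fun g -> (0 < alpha)%R -> strongly_convex alpha g ->
  is_minimizer g xstar -> g xstar \is a fin_num ->
  (forall z, closed_fun (gx z) /\ convex_fun (gx z)) ->
  (forall z y, gx z y <= g y + (q / 2 * enorm (y - z) ^+ 2)%:E /\
               g y <= gx z y + (q / 2 * enorm (y - z) ^+ 2)%:E) ->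
  (q < theta)%R ->
  (forall k, is_minimizer
      (fun y => gx (x k) y + (theta / 2 * enorm (y - x k) ^+ 2)%:E) (x k.+1)) ->
  forall k : nat,
    (enorm (x k.+1 - xstar)
      <= ((theta + q) / (alpha + theta)) `^ (k.+1%:R / 2) * enorm (x 0%N - xstar))%R.
Proof.
move=> _ a0 hsc hmin hfin hgx hq qt hp k.
have key j : ((alpha + theta) * enorm (x j.+1 - xstar) ^+ 2
    + (theta - q) * enorm (x j.+1 - x j) ^+ 2
     <= (theta + q) * enorm (xstar - x j) ^+ 2)%R.
  have [[hno _] hcv] := hgx (x j).
  exact: (@step _ _ _ _ _ _ _ _ _ _ hsc hmin hfin hno hcv (hq (x j)) (hp j)).
have RHS0 : (0 <= ((theta + q) / (alpha + theta)) `^ (k.+1%:R / 2) * enorm (x 0%N - xstar))%R.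
  by rewrite mulr_ge0 ?powR_ge0 ?enorm_ge0.
have [q0|q0] := ltrP q 0.
  pose z := x k.+1.
  pose G := fine (g xstar).
  have gsE : g xstar = G%:E by rewrite /G fineK.
  have [hno _] := (hgx z).1.
  have [A gxsE] : exists A, gx z xstar = A%:E.
    apply: (@fin_of _ _ (G + q / 2 * enorm (xstar - z) ^+ 2)%R (hno xstar)).
    by have [+ _] := hq z xstar; rewrite gsE.
  have [h1 h2] := hq z xstar; rewrite gsE gxsE -EFinD lee_fin in h1.
  rewrite gsE gxsE -EFinD lee_fin in h2.
  have e0 : (0 <= enorm (xstar - z))%R by apply: enorm_ge0.
  have : (enorm (xstar - z) ^+ 2 <= 0)%R by nra.
  rewrite enormB.
  have : (0 <= enorm (z - xstar))%R by apply: enorm_ge0.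
  move: RHS0; rewrite /z; nra.
have th0 : (0 < theta)%R by lra.
have at0 : (0 < alpha + theta)%R by lra.
pose r := ((theta + q) / (alpha + theta))%R.
have r0 : (0 <= r)%R by rewrite divr_ge0 //; lra.
have rec j : (enorm (x j.+1 - xstar) ^+ 2 <= r * enorm (x j - xstar) ^+ 2)%R.
  have := key j; rewrite [enorm (xstar - _)]enormB /r.
  have := sqr_ge0 (enorm (x j.+1 - x j)%R).
  rewrite mulrAC ler_pdivlMr //; nra.
have ind j : (enorm (x j - xstar) ^+ 2 <= r ^+ j * enorm (x 0%N - xstar) ^+ 2)%R.
  elim: j => [|j IH]; first by rewrite expr0 mul1r.
  apply: (le_trans (rec j)); rewrite [(r ^+ j.+1)%R]exprS -mulrA; exact: ler_wpM2l.
have P2 : ((r `^ (k.+1%:R / 2)) ^+ 2 = r ^+ k.+1)%R.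
  rewrite -powR_mulrn ?powR_ge0 // -powRrM divfK ?pnatr_eq0 //.
  by rewrite powR_mulrn.
rewrite -/r -[enorm (x k.+1 - xstar)]ger0_norm ?enorm_ge0 //.
rewrite -[X in (_ <= X)%R]ger0_norm //.
rewrite -!sqrtr_sqr ler_sqrt ?sqr_ge0 // exprMn P2.
exact: ind.
Qed.
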